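(* Let $X$ be a Tychonoff space containing a countably infinite subset $N$ such that (1) $N$ is not nowhere dense in $X$; (2) $X\setminus N$ is dense in $X$; (3) each singleton subset of $N$ is a zero set in $X$. Then $T''(X)$ is not closed under uniform limits (there is a sequence in $T''(X)$ converging uniformly on $X$ to a function not in $T''(X)$), and hence $T''(X)$ is not ring-isomorphic to $C(Y)$ for any topological space $Y$.
   Context: $C(X)$ is the ring of real-valued continuous functions on $X$. A zero set is a set $Z(g)=\{x: g(x)=0\}$ with $g\in C(X)$, and a cozero set is its complement $coz(g)$. $T''(X)$ is the ring (under pointwise operations) of all functions $f\colon X\to\mathbb{R}$ for which there is a dense cozero set $U$ of $X$ with $f|_U$ continuous. *)

(* Defs.v *)
From HB Require Import structures.
From mathcomp Require Import all_boot all_order all_algebra.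
From mathcomp Require Import all_classical all_reals all_analysis.
Set Implicit Arguments. Unset Strict Implicit. Unset Printing Implicit Defensive.
Import Order.TTheory GRing.Theory Num.Theory numFieldNormedType.Exports.
Local Open Scope classical_set_scope.
Local Open Scope ring_scope.

Definition tychonoff_space (R : realType) (X : topologicalType) : Prop :=
  accessible_space X /\
  forall (x : X) (B : set X), closed B -> ~ B x ->
    exists f : X -> R, continuous f /\ f x = 0 /\ (forall y, B y -> f y = 1).

Definition zero_set (R : realType) (X : topologicalType) (g : X -> R) : set X :=
  [set x | g x = 0].

Definition is_zero_set (R : realType) (X : topologicalType) (A : set X) : Prop :=
  exists g : X -> R, continuous g /\ A = zero_set g.

Definition is_cozero_set (R : realType) (X : topologicalType) (U : set X) : Prop :=
  exists g : X -> R, continuous g /\ U = [set x | g x != 0].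

Definition nowhere_dense (X : topologicalType) (A : set X) : Prop :=
  interior (closure A) = set0.

Definition Cfun (R : realType) (X : topologicalType) (f : X -> R) : Prop :=
  continuous f.

Definition T2fun (R : realType) (X : topologicalType) (f : X -> R) : Prop :=
  exists U : set X, is_cozero_set R U /\ dense U /\ {within U, continuous f}.

Definition ring_iso_between (R : realType) (X Y : Type)
    (P : (X -> R) -> Prop) (Q : (Y -> R) -> Prop) : Prop :=
  exists phi : (X -> R) -> (Y -> R),
    [/\ (forall f, P f -> Q (phi f)),
        (forall f g, P f -> P g -> phi f = phi g -> f = g),
        (forall h, Q h -> exists2 f, P f & phi f = h),
        (forall f g, P f -> P g -> phi (fun x => f x + g x) = (fun y => phi f y + phi g y)) &
        (forall f g, P f -> P g -> phi (fun x => f x * g x) = (fun y => phi f y * phi g y))].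

(* Main.v *)
Require Import Defs.
From HB Require Import structures.
From mathcomp Require Import all_boot all_order all_algebra.
From mathcomp Require Import all_classical all_reals all_analysis.
From mathcomp Require Import lra.
Import Order.TTheory GRing.Theory Num.Theory numFieldNormedType.Exports.
Local Open Scope classical_set_scope.
Local Open Scope ring_scope.


Section T2.
Variables (R : realType) (X : topologicalType).

Lemma coz_open (U : set X) : is_cozero_set R U -> open U.
Proof.
move=> [h [hc ->]].
have -> : [set x | h x != 0] = h @^-1` [set r : R | r != 0] by [].
by apply: (continuousP h).1 => //; exact: open_neq.
Qed.

Lemma coz_setT : is_cozero_set R (@setT X).
Proof.
exists (fun _ => 1); split; first exact: cst_continuous.
by apply/seteqP; split=> x //= _; exact: oner_neq0.
Qed.

Lemma coz_I (U V : set X) : is_cozero_set R U -> is_cozero_set R V ->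
  is_cozero_set R (U `&` V).
Proof.
move=> [g1 [c1 ->]] [g2 [c2 ->]].
exists (fun x => g1 x * g2 x); split; first by move=> x; exact: (continuousM (c1 x) (c2 x)).
rewrite eqEsubset; split=> x /=; rewrite mulf_eq0 negb_or; [move=> [-> ->]|move/andP] => //.
Qed.

Lemma dense_I (U V : set X) : dense U -> open U -> dense V -> dense (U `&` V).
Proof.
move=> dU oU dV O O0 oO.
have [y [Oy Uy]] := dU O O0 oO.
have [z [[Oz Uz] Vz]] := dV (O `&` U) (ex_intro _ y (conj Oy Uy)) (openI oO oU).
by exists z.
Qed.

Lemma T2_inP (f : X -> R) : T2fun f <->
  exists U, [/\ is_cozero_set R U, dense U & forall x, U x -> {for x, continuous f}].
Proof.
split=> [[U [cU [dU cf]]]|[U [cU dU cf]]]; exists U.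
  split=> //; rewrite continuous_open_subspace in cf; last exact: coz_open.
  by move=> x Ux; apply: cf; rewrite inE.
split=> //; split=> //; rewrite continuous_open_subspace; last exact: coz_open.
by move=> x; rewrite inE; exact: cf.
Qed.

Lemma T2_const (c : R) : T2fun (fun _ : X => c).
Proof.
apply/T2_inP; exists setT; split; first exact: coz_setT.
  by move=> O [x Ox] _; exists x.
by move=> x _; exact: cst_continuous.
Qed.

Lemma T2_add (f g : X -> R) : T2fun f -> T2fun g -> T2fun (fun x => f x + g x).
Proof.
move=> /T2_inP[U [cU dU cf]] /T2_inP[V [cV dV cg]].
apply/T2_inP; exists (U `&` V); split.
- exact: coz_I.
- by apply: dense_I => //; exact: coz_open.
- by move=> x [Ux Vx]; exact: (continuousD (cf x Ux) (cg x Vx)).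
Qed.

Lemma T2_mul (f g : X -> R) : T2fun f -> T2fun g -> T2fun (fun x => f x * g x).
Proof.
move=> /T2_inP[U [cU dU cf]] /T2_inP[V [cV dV cg]].
apply/T2_inP; exists (U `&` V); split.
- exact: coz_I.
- by apply: dense_I => //; exact: coz_open.
- by move=> x [Ux Vx]; exact: (continuousM (cf x Ux) (cg x Vx)).
Qed.

Lemma T2_comp (f : X -> R) (k : R -> R) : continuous k -> T2fun f ->
  T2fun (fun x => k (f x)).
Proof.
move=> ck /T2_inP[U [cU dU cf]].
apply/T2_inP; exists U; split => // x Ux.
exact: (continuous_comp (cf x Ux) (ck (f x))).
Qed.

End T2.
Arguments coz_open {R X U}.
Arguments coz_I {R X U V}.
Arguments dense_I {X U V}.
Arguments T2_inP {R X f}.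
Arguments T2_add {R X f g}.
Arguments T2_mul {R X f g}.
Arguments T2_comp {R X f k}.
Arguments T2_const {R X}.


Lemma small_inv (R : realType) (e : R) : 0 < e -> exists k : nat, (k.+1%:R)^-1 < e.
Proof.
move=> e0; have ie0 : 0 <= e^-1 by rewrite invr_ge0 ltW.
have := archi_boundP ie0.
set k := Num.Def.archi_bound _ => hk; exists k.
rewrite -[e]invrK ltf_pV2 ?posrE ?invr_gt0 ?ltr0Sn //.
by apply: lt_le_trans hk _; rewrite ler_nat.
Qed.

Lemma part1 (R : realType) (X : topologicalType) (N : set X) :
  countable N -> ~ nowhere_dense N -> dense (~` N) ->
  (forall p, N p -> is_zero_set R [set p]) ->
  exists (f : nat -> X -> R) (g : X -> R),
      (forall n, T2fun (f n)) /\
      (forall e : R, 0 < e -> exists m : nat, forall n, (m <= n)%N ->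
          forall x, `|f n x - g x| < e) /\
      ~ T2fun g.
Proof.
move=> /countable_injP [idx idxI] ndN dCN zN.
pose w (k : nat) : R := (k.+1%:R)^-1.
have w0 k : 0 < w k by rewrite invr_gt0 ltr0Sn.
pose F n := [set x | N x /\ (idx x < n)%N].
pose f n x := if `[< F n x >] then w (idx x) else 0.
pose g x := if `[< N x >] then w (idx x) else 0.
have cozF n : is_cozero_set R (~` F n).
  elim: n => [|n IH].
    have -> : ~` F 0%N = setT by rewrite eqEsubset; split=> x // _ [].
    exact: coz_setT.
  have [[p [Np ip]]|nop] := pselect (exists p, N p /\ idx p = n).
    have [h [hc hE]] := zN p Np.
    have -> : ~` F n.+1 = ~` F n `&` [set x | h x != 0].
      have hp : forall x, (h x == 0) = (x == p).
        move=> x; apply/idP/idP => /eqP H; apply/eqP.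
          by have : zero_set h x by []; rewrite -hE.
        by have : [set p] x by []; rewrite hE H.
      rewrite eqEsubset; split=> x /=.
        move=> nF1; split.
          by move=> [Nx lt]; apply: nF1; split => //; apply: ltnW.
        by rewrite hp; apply/negP => /eqP xp; apply: nF1; rewrite xp; split => //; rewrite ip.
      rewrite hp => -[nF xp] [Nx lt].
      move: lt; rewrite ltnS leq_eqVlt => /orP[/eqP ixn|lt]; last exact: nF.
      have xpe : x = p by apply: idxI; rewrite ?inE // ixn ip.
      by move: xp; rewrite xpe ?hp eqxx.
    by apply: coz_I IH _; exists h.
  have -> : ~` F n.+1 = ~` F n; last exact: IH.
  rewrite eqEsubset; split=> x /= nF [Nx lt]; apply: nF; split => //.
    exact: ltnW.
  move: lt; rewrite ltnS leq_eqVlt => /orP[/eqP ixn|//].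
  by exfalso; apply: nop; exists x; split.
exists f, g; split; [|split].
- move=> n; exists (~` F n); split; first exact: cozF.
  split.
    move=> O O0 oO; have [z [Oz Nz]] := dCN O O0 oO.
    by exists z; split => // -[].
  apply: (@subspace_eq_continuous _ _ _ (fun _ => 0)).
    by move=> x; rewrite inE => Fx; rewrite /from_subspace /f asboolF.
  exact: cst_continuous.
- move=> e e0; have [m hm] := @small_inv _ e e0.
  exists m => n mn x; rewrite /f /g.
  have [Nx|Nx] := pselect (N x); last first.
    by rewrite !asboolF ?subrr ?normr0 // => -[].
  rewrite (asboolT Nx).
  have [Fx|Fx] := pselect (F n x); first by rewrite asboolT // subrr normr0.
  rewrite asboolF // sub0r normrN ger0_norm; last exact: ltW.
  apply: le_lt_trans hm; rewrite lef_pV2 ?posrE ?ltr0Sn // ler_nat ltnS.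
  apply: leq_trans mn _; rewrite leqNgt; apply/negP => H; exact: Fx.
- move=> [U [cU [dU cg]]].
  have oU := coz_open cU.
  rewrite continuous_open_subspace // in cg.
  have UN : forall p, N p -> ~ U p.
    move=> p Np Up.
    have gp : g p = w (idx p) by rewrite /g asboolT.
    have := cg p (mem_set Up).
    move=> /cvgrPdist_lt /(_ (g p)); rewrite gp => /(_ (w0 _)) B.
    have [z [Iz Nz]] := dCN _ (ex_intro _ p B) (open_interior _).
    have := interior_subset Iz; rewrite /= /g asboolF // subr0.
    by rewrite ger0_norm ?ltxx // ltW.
  have [y Iy] : exists y, (closure N)° y.
    apply: contrapT => H; apply: ndN; rewrite /nowhere_dense -subset0 => y Iy.
    by apply: H; exists y.
  have [z [Iz Uz]] := dU _ (ex_intro _ y Iy) (open_interior _).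
  have cz := interior_subset Iz.
  have [q [Nq Uq]] := cz U (open_nbhs_nbhs (conj oU Uz)).
  exact: UN q Nq Uq.
Qed.


Lemma normle_iff (R : realType) (a b r : R) :
  `|a - b| <= r <-> (a <= b + r /\ b <= a + r).
Proof.
rewrite ler_norml; split => [/andP[h1 h2]|[h1 h2]]; first by split; lra.
by apply/andP; split; lra.
Qed.

Lemma no_iso (R : realType) (X Y : topologicalType) (f : nat -> X -> R) (g : X -> R) :
  (forall n, T2fun (f n)) ->
  (forall e : R, 0 < e -> exists m : nat, forall n, (m <= n)%N ->
     forall x, `|f n x - g x| < e) ->
  ~ T2fun g -> ~ ring_iso_between (@T2fun R X) (@Cfun R Y).
Proof.
move=> Tf Uc nTg [phi [Pphi inj surj padd pmul]].
pose c (r : R) := fun _ : X => r.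
have Pc r : T2fun (c r) := T2_const r.
have pw (h1 h2 : Y -> R) (y : Y) : h1 = h2 -> h1 y = h2 y by move=> ->.
have phi0 : phi (c 0) = (fun _ => 0).
  have := padd _ _ (Pc 0) (Pc 0).
  have -> : (fun x => c 0 x + c 0 x) = c 0 by apply: funext => x; rewrite /c addr0.
  move=> H; apply: funext => y; have := pw _ _ y H; lra.
have phi1 : phi (c 1) = (fun _ => 1).
  have Q1 : Cfun (fun _ : Y => (1:R)) by move=> y; exact: cst_continuous.
  have [e Pe phie] := surj _ Q1.
  have := pmul _ _ (Pc 1) Pe.
  have -> : (fun x => c 1 x * e x) = e by apply: funext => x; rewrite /c mul1r.
  rewrite phie => H; apply: funext => y; have := pw _ _ y H; lra.
have phiN1 : phi (c (-1)) = (fun _ => -1).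
  have := padd _ _ (Pc 1) (Pc (-1)).
  have -> : (fun x => c 1 x + c (-1) x) = c 0 by apply: funext => x; rewrite /c subrr.
  rewrite phi0 phi1 => H; apply: funext => y; have := pw _ _ y H; lra.
have phinat n : phi (c n%:R) = (fun _ => n%:R).
  elim: n => [|n IH]; first by rewrite phi0.
  have := padd _ _ (Pc 1) (Pc n%:R).
  have -> : (fun x => c 1 x + c n%:R x) = c n.+1%:R.
    by apply: funext => x; rewrite /c mulrS.
  by rewrite phi1 IH => ->; apply: funext => y; rewrite mulrS.
pose w (k : nat) : R := (k.+1%:R)^-1.
have w0 k : 0 < w k by rewrite invr_gt0 ltr0Sn.
have phiw k : phi (c (w k)) = (fun _ => w k).
  have := pmul _ _ (Pc k.+1%:R) (Pc (w k)).
  have Knz : k.+1%:R != 0 :> R by rewrite pnatr_eq0.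
  have -> : (fun x => c k.+1%:R x * c (w k) x) = c 1.
    by apply: funext => x; rewrite /c /w mulfV.
  rewrite phi1 phinat => H; apply: funext => y; have := pw _ _ y H => H1.
  by rewrite -[LHS](mulKf Knz) -H1 mulr1.
have PN (u : X -> R) : T2fun u -> T2fun (fun x => - u x).
  move=> Pu; have := T2_mul (Pc (-1)) Pu.
  by have -> : (fun x => c (-1) x * u x) = (fun x => - u x)
    by apply: funext => x; rewrite /c mulN1r.
have phiN (u : X -> R) : T2fun u -> phi (fun x => - u x) = (fun y => - phi u y).
  move=> Pu; have := pmul _ _ (Pc (-1)) Pu.
  have -> : (fun x => c (-1) x * u x) = (fun x => - u x)
    by apply: funext => x; rewrite /c mulN1r.
  by rewrite phiN1 => ->; apply: funext => y; rewrite mulN1r.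
have phiB (u v : X -> R) : T2fun u -> T2fun v ->
    phi (fun x => u x - v x) = (fun y => phi u y - phi v y).
  by move=> Pu Pv; rewrite (padd _ _ Pu (PN _ Pv)) phiN.
have pos (u : X -> R) : T2fun u -> (forall x, 0 <= u x) <-> (forall y, 0 <= phi u y).
  move=> Pu; split => [u0 y|pu0 x].
    pose s x := Num.sqrt (u x).
    have Ps : T2fun s := T2_comp (@sqrt_continuous R) Pu.
    have -> : u = (fun x => s x * s x).
      by apply: funext => x; rewrite /s -expr2 sqr_sqrtr.
    by rewrite pmul // -expr2 sqr_ge0.
  pose h y := Num.sqrt (phi u y).
  have Qh : Cfun h.
    move=> y; apply: (continuous_comp (Pphi _ Pu y)); exact: sqrt_continuous.
  have [s Ps phis] := surj h Qh.
  have E : phi (fun x => s x * s x) = phi u.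
    rewrite pmul // phis; apply: funext => y.
    by rewrite /h -expr2 sqr_sqrtr.
  by rewrite -(inj _ _ (T2_mul Ps Ps) Pu E) -expr2 sqr_ge0.
have le (u v : X -> R) : T2fun u -> T2fun v ->
    (forall x, u x <= v x) <-> (forall y, phi u y <= phi v y).
  move=> Pu Pv; have := pos _ (T2_add Pv (PN _ Pu)).
  rewrite (padd _ _ Pv (PN _ Pu)) phiN // => -[H1 H2]; split=> H x.
    by rewrite -subr_ge0; apply: H1 => z; rewrite subr_ge0.
  by rewrite -subr_ge0; apply: H2 => z; rewrite subr_ge0.
have tr (u v : X -> R) (k : nat) : T2fun u -> T2fun v ->
    (forall x, `|u x - v x| <= w k) <-> (forall y, `|phi u y - phi v y| <= w k).
  move=> Pu Pv.
  have A1 := le _ _ Pu (T2_add Pv (Pc (w k))).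
  have A2 := le _ _ Pv (T2_add Pu (Pc (w k))).
  rewrite !padd ?phiw // in A1 A2.
  split => H x; apply/normle_iff; split.
  - by apply: (A1.1 _ x) => z; rewrite /c; case: ((normle_iff _ _ _ _).1 (H z)).
  - by apply: (A2.1 _ x) => z; rewrite /c; case: ((normle_iff _ _ _ _).1 (H z)).
  - by apply: (A1.2 _ x) => z; rewrite /c; case: ((normle_iff _ _ _ _).1 (H z)).
  - by apply: (A2.2 _ x) => z; rewrite /c; case: ((normle_iff _ _ _ _).1 (H z)).
pose u n := phi (f n).
have hk : forall k, exists m, forall n n', (m <= n)%N -> (m <= n')%N ->
    forall y, `|u n y - u n' y| <= w k.
  move=> k; have [m hm] := Uc (w k / 2) (divr_gt0 (w0 k) (ltr0Sn _ 1)).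
  exists m => n n' mn mn'; apply/(tr _ _ _ (Tf n) (Tf n')) => x.
  have h1 := hm n mn x; have h2 := hm n' mn' x.
  have := ler_distD (g x) (f n x) (f n' x).
  rewrite (distrC (g x)); lra.
have /choice [M hM] := hk.
have cvgy : forall y, cvg ((fun n => u n y) @ \oo).
  move=> y; apply/cauchy_cvgP; apply: cauchy_exP => eps eps0.
  have [k hwk] := @small_inv _ eps eps0.
  exists (u (M k) y).
  exists (M k) => // n /= Mn.
  rewrite /ball /=; apply: le_lt_trans hwk; exact: hM.
pose h y := lim ((fun n => u n y) @ \oo).
have hB : forall k n y, (M k <= n)%N -> `|u n y - h y| <= w k.
  move=> k n y Mn; rewrite leNgt; apply/negP => H.
  have d0 : 0 < `|u n y - h y| - w k by rewrite subr_gt0.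
  have := (cvgrPdist_lt _ _).1 (cvgy y) _ d0.
  move=> /(_ _) [N0 _ HN].
  pose n' := maxn N0 (M k).
  have h1 : `|h y - u n' y| < `|u n y - h y| - w k := HN n' (leq_maxl _ _).
  have h2 := hM k n n' Mn (leq_maxr _ _) y.
  have := ler_distD (u n' y) (u n y) (h y).
  rewrite distrC in h1; lra.
have Qh : Cfun h.
  move=> y; apply/cvgrPdist_lt => eps eps0.
  have [k hwk] := @small_inv _ (eps / 3) (divr_gt0 eps0 (ltr0Sn _ 2)).
  have hw : w k < eps / 3 := hwk.
  have := (cvgrPdist_lt _ _).1 (Pphi _ (Tf (M k)) y) _ (w0 k).
  move=> /(_ _); apply: filterS => z hz.
  have h1 := hB k (M k) y (leqnn _).
  have h2 := hB k (M k) z (leqnn _).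
  have hz' : `|u (M k) y - u (M k) z| < w k := hz.
  have e1 := distrC (h y) (u (M k) y).
  have t1 := ler_distD (u (M k) y) (h y) (h z).
  have t2 := ler_distD (u (M k) z) (u (M k) y) (h z).
  lra.
have [f0 Pf0 phif0] := surj h Qh.
have fB : forall k n x, (M k <= n)%N -> `|f n x - f0 x| <= w k.
  move=> k n x Mn; move: x; apply/(tr _ _ _ (Tf n) Pf0) => y.
  rewrite phif0; exact: hB.
have f0g : f0 = g.
  apply: funext => x; apply/eqP; rewrite -subr_eq0 -normr_eq0 eq_le normr_ge0 andbT.
  rewrite leNgt; apply/negP => H.
  have [k hwk] := @small_inv _ (`|f0 x - g x| / 2) (divr_gt0 H (ltr0Sn _ 1)).
  have hw : w k < `|f0 x - g x| / 2 := hwk.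
  have [m hm] := Uc _ (divr_gt0 H (ltr0Sn _ 1)).
  pose n := maxn m (M k).
  have h1 := hm n (leq_maxl _ _) x.
  have h2 := fB k n x (leq_maxr _ _).
  have t1 := ler_distD (f n x) (f0 x) (g x).
  have e1 := distrC (f0 x) (f n x).
  move: h1 h2 t1 e1 hw; clear; lra.
by apply: nTg; rewrite -f0g.
Qed.



Theorem theorem2p4 (R : realType) (X : topologicalType) (N : set X) :
  tychonoff_space R X ->
  countable N -> infinite_set N ->
  ~ nowhere_dense N ->
  dense (~` N) ->
  (forall p, N p -> is_zero_set R [set p]) ->
  (exists (f : nat -> X -> R) (g : X -> R),
      (forall n, T2fun (f n)) /\
      (forall e : R, 0 < e -> exists m : nat, forall n, (m <= n)%N ->
          forall x, `|f n x - g x| < e) /\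
      ~ T2fun g) /\
  (forall Y : topologicalType, ~ ring_iso_between (@T2fun R X) (@Cfun R Y)).
Proof.
move=> _ cN _ ndN dCN zN.
have [f [g [Tf [Uc nTg]]]] := @part1 R X N cN ndN dCN zN.
split; first by exists f, g.
by move=> Y; exact: (@no_iso R X Y f g Tf Uc nTg).
Qed.
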